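(* For $n\ge 2$ let $X^n$ be the continuous-time Markov chain on $V_n=\{v_0,\dots,v_{2n}\}$, $A=v_0$, $B=v_n$, $C=v_{2n}$, with nonzero jump rates $q(v_i,v_{i+1})=1$ for $0\le i\le 2n-1$, $i\neq n$; $q(B,v_{n+1})=1/n$, $q(B,C)=1-1/n$; $q(v_{i+1},v_i)=2^{-n^2}$ for $0\le i\le 2n-1$; $q(C,B)=(n-1)2^{-n^3}$. Let $P^n_t$ be its semigroup and $\pi_n$ its reversible stationary distribution. Then for all $n$ sufficiently large, for all $x,y\in V_n\setminus\{C\}$ and all $t$ with $n/2\le t\le 3n$, \[ P^n_t(x,y)\ge \pi_n(y). \]
   Context: The graph underlying $X^n$ is a path $v_0\cdots v_{2n}$ plus an extra edge $B$–$C$; transitions occur only along edges with the given rates. *)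

(* Defs.v *)
From HB Require Import structures.
From mathcomp Require Import all_boot all_order all_algebra.
From mathcomp Require Import all_classical all_reals all_analysis.
Set Implicit Arguments. Unset Strict Implicit. Unset Printing Implicit Defensive.
Import Order.TTheory GRing.Theory Num.Theory.
Import numFieldNormedType.Exports.
Local Open Scope ring_scope.

(* State space V_n = {v_0, ..., v_{2n}} encoded as 'I_(2n).+1, v_i <-> i.
   A = v_0, B = v_n, C = v_{2n}. *)
Notation state n := 'I_((n.*2).+1).

Definition rate (R : realType) (n : nat) (x y : state n) : R :=
  let i := nat_of_ord x in let j := nat_of_ord y in
  if (j == i.+1)%N then (if (i == n)%N then n%:R^-1 else 1)
  else if ((i == n) && (j == n.*2))%N then 1 - n%:R^-1
  else if (i == j.+1)%N then (2 ^+ (n ^ 2))^-1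
  else if ((i == n.*2) && (j == n))%N then (n.-1)%:R * (2 ^+ (n ^ 3))^-1
  else 0.
Arguments rate : clear implicits.

Definition generator (R : realType) (n : nat) : 'M[R]_((n.*2).+1) :=
  \matrix_(x < (n.*2).+1, y < (n.*2).+1) (if x == y then - \sum_(z | z != x) rate R n x z
                  else rate R n x y).
Arguments generator : clear implicits.

Definition semigroup (R : realType) (n : nat) (t : R) (x y : state n) : R :=
  let u : R^nat := fun k => t ^+ k / (k`!)%:R * ((generator R n) ^+ k) x y in
  limn (series u).
Arguments semigroup : clear implicits.

Definition reversible_distribution (R : realType) (n : nat) (pi : state n -> R) : Prop :=
  (forall x, 0 <= pi x) /\ (\sum_x pi x = 1) /\
  (forall x y, pi x * rate R n x y = pi y * rate R n y x).
Arguments reversible_distribution : clear implicits.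

(* Main.v *)
Require Import Defs.
From HB Require Import structures.
From mathcomp Require Import all_boot all_order all_algebra.
From mathcomp Require Import all_classical all_reals all_analysis.
Import Order.TTheory GRing.Theory Num.Theory.
Import numFieldNormedType.Exports.
From mathcomp Require Import ring lra zify.
Local Open Scope classical_set_scope.
Local Open Scope ring_scope.
Lemma sum_ind m c : (\sum_(z < m) ((z:nat) == c) <= 1)%N.
Proof.
case: (ltnP c m) => hc.
  rewrite (bigD1 (Ordinal hc)) //= eqxx big1 //.
  move=> z hz; have /negbTE -> // : (z : nat) != c.
  by apply: contraNneq hz => e; apply/eqP/val_inj.
rewrite big1 // => z _; have /negbTE -> // : (z : nat) != c.
by apply/eqP => e; move: (ltn_ord z); rewrite e ltnNge hc.
Qed.


Definition Nm (R : realType) (n : nat) : 'M[R]_((n.*2).+1) := generator R n + 5%:M.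

Section MxPow.
Variable R : realType.
Variable m : nat.
Implicit Types M : 'M[R]_m.+1.

Lemma mxpow_ge0 M : (forall i j, 0 <= M i j) -> forall k i j, 0 <= (M ^+ k) i j.
Proof.
move=> h; elim=> [|k IH] i j.
  by rewrite expr0 mxE ler0n.
rewrite exprS -mulmxE mxE; apply: sumr_ge0 => l _; exact: mulr_ge0.
Qed.

Lemma mxpow_split M : (forall i j, 0 <= M i j) -> forall a b i z j,
  (M ^+ a) i z * (M ^+ b) z j <= (M ^+ (a + b)) i j.
Proof.
move=> h a b i z j; rewrite exprD -mulmxE mxE (bigD1 z) //= lerDl.
by apply: sumr_ge0 => l _; apply: mulr_ge0; apply: mxpow_ge0.
Qed.

Lemma mxpow_le M c : (forall i j, 0 <= M i j) -> (forall i j, M i j <= c) ->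
  forall k i j, (M ^+ k) i j <= (c * m.+1%:R) ^+ k.
Proof.
move=> h0 hc; elim=> [|k IH] i j.
  by rewrite expr0 expr0 mxE; case: (i == j).
rewrite exprSr -mulmxE mxE exprSr.
apply: (@le_trans _ _ (\sum_(l < m.+1) (c * m.+1%:R) ^+ k * c)).
  apply: ler_sum => l _; apply: ler_pM => //; first exact: mxpow_ge0.
rewrite sumr_const card_ord -mulr_natr; lra.
Qed.
End MxPow.
Arguments mxpow_ge0 {R m M}.
Arguments mxpow_split {R m M}.
Arguments mxpow_le {R m M c}.

Section Chain.
Variable R : realType.
Variable n : nat.
Hypothesis n2 : (2 <= n)%N.

Local Notation rt := (rate R n).
Local Notation q := ((2 ^+ (n ^ 2))^-1 : R).

Lemma n_gt0 : (0 < n%:R :> R).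
Proof. by rewrite ltr0n; lia. Qed.

Lemma invn_le1 : n%:R^-1 <= 1 :> R.
Proof. by rewrite invf_le1 ?n_gt0 // ler1n; lia. Qed.

Lemma q_ge0 : 0 <= q.
Proof. by rewrite invr_ge0 exprn_ge0. Qed.

Lemma q_le1 : q <= 1.
Proof. by rewrite invf_le1 ?exprn_gt0 // exprn_ege1 // ler1n. Qed.

Lemma rate_ge0 x z : 0 <= rt x z.
Proof.
have := invn_le1; have := n_gt0 => h1 h2.
rewrite /rate; repeat case: ifP => _.
all: try by rewrite ?invr_ge0 ?ler0n.
all: try by rewrite subr_ge0.
all: try by rewrite invr_ge0 exprn_ge0.
all: try by rewrite mulr_ge0 ?ler0n // invr_ge0 exprn_ge0.
Qed.

Lemma rate_le1 x z : rt x z <= 1.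
Proof.
have := invn_le1; have := n_gt0 => h1 h2.
rewrite /rate; repeat case: ifP => _ //.
all: try by rewrite gerBl invr_ge0 ler0n.
all: try exact: q_le1.
all: try by rewrite lerBlDr lerDl invr_ge0 ler0n.
rewrite ler_pdivrMr ?exprn_gt0 // mul1r -natrX ler_nat.
  apply: leq_trans (_ : n <= 2 ^ (n ^ 3))%N; first lia.
  apply: leq_trans (ltnW (ltn_expl n (isT : 1 < 2)%N)) _.
  rewrite leq_pexp2l // -{1}(expn1 n) leq_exp2l //; lia.
Qed.

Lemma rate_ind (x z : state n) :
  rt x z <= ((((z:nat) == (x:nat).+1) + ((z:nat) == n.*2) + ((z:nat).+1 == x) + ((z:nat) == n))%N)%:R.
Proof.
case E : [|| (z:nat) == (x:nat).+1, (z:nat) == n.*2, (z:nat).+1 == x | (z:nat) == n].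
  apply: le_trans (rate_le1 x z) _; rewrite ler1n.
  by case/or4P: E => -> //=; rewrite ?addnS ?addSn.
move: E; rewrite /rate /=.
case: ((z:nat) =P (x:nat).+1) => //= _.
case: ((z:nat) =P n.*2) => //= _.
case: ((z:nat).+1 =P x) => //= h3.
case: ((z:nat) =P n) => //= _ _.
rewrite andbF; case: ((x:nat) =P (z:nat).+1) => [e|_]; first by case: h3; rewrite e.
by rewrite andbF.
Qed.

Lemma exit_le4 (x : state n) : \sum_(z | z != x) rt x z <= 4.
Proof.
pose F (z : state n) := ((((z:nat) == (x:nat).+1) + ((z:nat) == n.*2) + ((z:nat).+1 == x) + ((z:nat) == n))%N).
apply: (@le_trans _ _ (\sum_z (F z)%:R)).
  rewrite [X in _ <= X](bigD1 x) //= -[X in X <= _]add0r; apply: lerD => //.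
  by apply: ler_sum => z _; exact: rate_ind.
rewrite -natr_sum ler_nat /F !big_split /=.
have h1 := sum_ind (n.*2).+1 (x:nat).+1.
have h2 := sum_ind (n.*2).+1 n.*2.
have h4 := sum_ind (n.*2).+1 n.
have h3 : (\sum_(i < (n.*2).+1) ((i:nat).+1 == x) <= 1)%N.
  apply: leq_trans (sum_ind (n.*2).+1 (x:nat).-1); apply: leq_sum => i _.
  by case: ((i:nat).+1 =P x) => // <- /=; rewrite eqxx.
exact: leq_trans (leq_add (leq_add (leq_add h1 h2) h3) h4) _.
Qed.

Local Notation N := (Nm R n).

Lemma Nm_off (x y : state n) : x != y -> N x y = rt x y.
Proof. by move=> /negbTE h; rewrite /Nm !mxE h addr0. Qed.

Lemma Nm_diag (x : state n) : N x x = 5 - \sum_(z | z != x) rt x z.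
Proof. by rewrite /Nm !mxE eqxx mulr1n addrC. Qed.

Lemma Nm_ge0 (x y : state n) : 0 <= N x y.
Proof.
case: (eqVneq x y) => [<-|h]; last by rewrite Nm_off // rate_ge0.
by rewrite Nm_diag subr_ge0; apply: le_trans (exit_le4 x) _; lra.
Qed.

Lemma Nm_diag_ge1 (x : state n) : 1 <= N x x.
Proof. by rewrite Nm_diag; have := exit_le4 x; lra. Qed.

Lemma Nm_le5 (x y : state n) : N x y <= 5.
Proof.
case: (eqVneq x y) => [<-|h]; last by rewrite Nm_off //; apply: le_trans (rate_le1 _ _) _; lra.
rewrite Nm_diag gerBl; apply: sumr_ge0 => z _; exact: rate_ge0.
Qed.

Local Notation v i := (@inord (n.*2) i).

Lemma N0 (y : state n) : (N ^+ 0) y y = 1.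
Proof. by rewrite expr0 mxE eqxx. Qed.

Lemma vK i : (i <= n.*2)%N -> (v i : nat) = i.
Proof. by move=> h; rewrite inordK. Qed.

Lemma N_fwd j : (j < n.*2)%N -> N (v j) (v j.+1) = if (j == n)%N then n%:R^-1 else 1.
Proof.
move=> hj; rewrite Nm_off; last by rewrite -val_eqE /= !vK //; lia.
by rewrite /rate /= !vK //; [rewrite eqxx | lia].
Qed.

Lemma N_bwd i : (i < n.*2)%N -> N (v i.+1) (v i) = q.
Proof.
move=> hi; rewrite Nm_off; last by rewrite -val_eqE /= !vK //; lia.
rewrite /rate /= !vK //; last lia.
have -> : (i == i.+2) = false by lia.
have -> : (i.+1 == n) && (i == n.*2) = false by apply/negbTE; apply/nandP; right; lia.
by rewrite eqxx.
Qed.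

Lemma Npow_ge0 k (x y : state n) : 0 <= (N ^+ k) x y.
Proof. exact: mxpow_ge0 Nm_ge0 _ _ _. Qed.

Lemma self_loop k (y : state n) : 1 <= (N ^+ k) y y.
Proof.
elim: k => [|k IH]; first by rewrite N0.
have := mxpow_split Nm_ge0 1 k y y y; rewrite add1n expr1 => h; apply: le_trans h.
by rewrite -[1]mulr1; apply: ler_pM => //; exact: Nm_diag_ge1.
Qed.

Lemma fwd i j : (i <= j)%N -> (j <= n.*2)%N ->
  (if (j <= n)%N then 1 else n%:R^-1) <= (N ^+ (j - i)) (v i) (v j).
Proof.
have := invn_le1; have := n_gt0 => h1 h2.
elim: j => [|j IH] hij hj.
  have -> : i = 0%N by lia.
  by rewrite subnn N0.
case: (eqVneq i j.+1) => [->|hne].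
  by rewrite subnn N0; case: ifP => // _; exact: h2.
have hij' : (i <= j)%N by lia.
have := IH hij' (ltnW hj) => {}IH.
have := mxpow_split Nm_ge0 (j - i) 1 (v i) (v j) (v j.+1).
rewrite expr1 N_fwd // addn1 -subSn // => h; apply: le_trans h.
apply: le_trans (_ : (if (j <= n)%N then 1 else n%:R^-1) * (if (j == n)%N then n%:R^-1 else 1) <= _).
  case: (ltngtP j n) => h.
  - by rewrite mulr1.
  - by rewrite mulr1.
  - by rewrite mul1r.
apply: ler_pM => //; first by case: ifP => _ //; rewrite invr_ge0 ler0n.
by case: ifP => _ //; rewrite invr_ge0 ler0n.
Qed.

Lemma bwd j i : (j <= i)%N -> (i <= n.*2)%N -> q ^+ (i - j) <= (N ^+ (i - j)) (v i) (v j).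
Proof.
elim: i => [|i IH] hji hi.
  have -> : j = 0%N by lia.
  by rewrite subnn N0 expr0.
case: (eqVneq j i.+1) => [->|hne].
  by rewrite subnn N0 expr0.
have hji' : (j <= i)%N by lia.
have := IH hji' (ltnW hi) => {}IH.
have := mxpow_split Nm_ge0 1 (i - j) (v i.+1) (v i) (v j).
rewrite expr1 N_bwd // add1n -subSn // => h; apply: le_trans h.
rewrite subSn // exprS; apply: ler_pM => //.
all: try exact: q_ge0.
all: try (by apply: exprn_ge0; exact: q_ge0).
Qed.

Lemma path_bound i j : (i < n.*2)%N -> (j < n.*2)%N ->
  n%:R^-1 * q ^+ (i - j) <= (N ^+ (n.*2)) (v i) (v j).
Proof.
have := invn_le1; have := n_gt0 => h1 h2.
move=> hi hj; case: (leqP i j) => hij.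
  have e : ((j - i) + (n.*2 - (j - i)))%N = n.*2 by lia.
  have := mxpow_split Nm_ge0 (j - i) (n.*2 - (j - i)) (v i) (v j) (v j).
  rewrite e => h; apply: le_trans h.
  have -> : (i - j)%N = 0%N by lia.
  rewrite expr0 mulr1 -[n%:R^-1]mulr1; apply: ler_pM => //.
  all: try by rewrite invr_ge0 ler0n.
  all: try exact: self_loop.
  have hf := @fwd i j hij (ltnW hj).
  have hb : (n%:R^-1 : R) <= (if (j <= n)%N then 1 else n%:R^-1) by case: (j <= n)%N.
  exact: le_trans hb hf.
have e : ((i - j) + (n.*2 - (i - j)))%N = n.*2 by lia.
have := mxpow_split Nm_ge0 (i - j) (n.*2 - (i - j)) (v i) (v j) (v j).
rewrite e => h; apply: le_trans h.
rewrite mulrC; apply: ler_pM => //.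
all: try (by apply: exprn_ge0; exact: q_ge0).
all: try (by rewrite invr_ge0 ler0n).
all: try exact: (@bwd j i (ltnW hij) (ltnW hi)).
all: try (apply: le_trans h2 _; exact: self_loop).
Qed.

Lemma rate_fwd j : (j < n.*2)%N -> rt (v j) (v j.+1) = if (j == n)%N then n%:R^-1 else 1.
Proof. by move=> hj; rewrite /rate /= !vK //; [rewrite eqxx | lia]. Qed.

Lemma rate_bwd i : (i < n.*2)%N -> rt (v i.+1) (v i) = q.
Proof.
move=> hi; rewrite /rate /= !vK //; last lia.
have -> : (i == i.+2) = false by lia.
have -> : (i.+1 == n) && (i == n.*2) = false by apply/negbTE; apply/nandP; right; lia.
by rewrite eqxx.
Qed.

Lemma pi_C pi : reversible_distribution R n pi -> pi (v n.*2) <= 1.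
Proof.
case=> h0 [h1 _]; rewrite -h1 (bigD1 (v n.*2)) //= lerDl.
by apply: sumr_ge0 => z _.
Qed.

Lemma pi_bound pi : reversible_distribution R n pi -> forall d, (d <= n.*2)%N ->
  pi (v (n.*2 - d)) <= (if (n.*2 - d <= n)%N then n%:R else 1) * q ^+ d.
Proof.
move=> hp; have [h0 [_ hr]] := hp.
have := invn_le1; have := n_gt0 => h1 h2.
elim=> [|d IH] hd.
  rewrite subn0 expr0 mulr1; have -> : (n.*2 <= n)%N = false by lia.
  exact: pi_C.
have ej : (n.*2 - d = (n.*2 - d.+1).+1)%N by lia.
have := IH (ltnW hd); rewrite ej => {}IH.
set j := (n.*2 - d.+1)%N in IH *.
have hj : (j < n.*2)%N by rewrite /j; lia.
have e := hr (v j) (v j.+1).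
rewrite rate_fwd // rate_bwd // in e.
have hq := q_ge0.
case: (eqVneq j n) => hjn.
  have -> : (j <= n)%N by rewrite hjn.
  have e2 : (j.+1 <= n)%N = false by rewrite hjn; lia.
  have ejn : (j == n)%N by apply/eqP.
  rewrite e2 in IH; rewrite ejn in e.
  have epi : pi (v j) = n%:R * (pi (v j.+1) * q).
    by rewrite -e mulrA [n%:R * _]mulrC mulrK // unitfE lt0r_neq0.
  rewrite epi exprS mul1r in IH *.
  apply: ler_wpM2l; first exact: ler0n.
  by rewrite [q * _]mulrC; apply: ler_wpM2r.
rewrite (negbTE hjn) mulr1 in e.
have e2 : (j.+1 <= n)%N = (j <= n)%N by apply/idP/idP; lia.
rewrite e2 in IH; rewrite e exprS [q * _]mulrC mulrA; apply: ler_wpM2r => //.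
Qed.
End Chain.

Lemma fact_le k : (k`! <= k ^ k)%N.
Proof.
elim: k => [|k IH] //; rewrite factS expnS leq_mul2l /=.
apply: leq_trans IH _; case: k => [|k] //; rewrite leq_exp2r //.
Qed.

Lemma sq_le_pow n : (4 <= n)%N -> (n * n <= 2 ^ n)%N.
Proof.
elim: n => [|n IH] //; case: (ltngtP n 4) => h // h4.
- by have -> : n = 3%N by lia.
- have := IH (ltnW h); rewrite expnS; nia.
- by rewrite h.
Qed.

Lemma final_nat n : (40 <= n)%N -> (n * n * 2 ^ (34 * n) <= 2 ^ (n ^ 2))%N.
Proof.
move=> hn; apply: leq_trans (_ : 2 ^ n * 2 ^ (34 * n) <= _)%N.
  by rewrite leq_mul2r sq_le_pow ?orbT //; lia.
rewrite -expnD leq_exp2l //; nia.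
Qed.

Section Num.
Variable R : realType.

Lemma expR_half : expR (1/2 : R) <= 2.
Proof.
have h : 1 + (- (1/2)) <= expR (- (1/2) : R) := expR_ge1Dx _.
have -> : (1/2 : R) = - (- (1/2)) by rewrite opprK.
have e : 1 + - (1/2) = (2^-1 : R) by field.
rewrite e in h.
rewrite expRN; apply: (@le_trans _ _ ((2:R)^-1)^-1); last by rewrite invrK.
by rewrite lef_pV2 ?posrE ?expR_gt0 ?invr_gt0.
Qed.

Lemma expR_bound (n : nat) (t : R) : 0 <= t -> t <= 3 * n%:R ->
  (2 ^+ (30 * n))^-1 <= expR (- (5 * t)).
Proof.
move=> t0 t3; rewrite expRN lef_pV2 ?posrE ?expR_gt0 ?exprn_gt0 //.
apply: (@le_trans _ _ (expR ((30 * n)%:R * (1/2)))).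
  by rewrite ler_expR natrM; lra.
rewrite expRM_natl; apply: le_trans (_ : 2 ^+ (30 * n) <= _) => //.
case: (posnP (30 * n)) => [->|hp]; first by rewrite !expr0.
rewrite ler_pXn2r ?nnegrE ?expR_ge0 //; exact: expR_half.
Qed.

Lemma poisson_bound (n : nat) (t : R) : (0 < n)%N -> n%:R / 2 <= t ->
  (2 ^+ (4 * n))^-1 <= t ^+ (n.*2) / (n.*2)`!%:R.
Proof.
move=> n0 ht.
have hn : (0 < n%:R :> R) by rewrite ltr0n.
have h1 : (n%:R/2)^+(n.*2) <= t^+(n.*2) :> R.
  rewrite ler_pXn2r ?nnegrE //; try lia; lra.
have h2 : ((n.*2)%:R ^+ (n.*2))^-1 <= ((n.*2)`!%:R : R)^-1.
  rewrite lef_pV2 ?posrE ?exprn_gt0 ?ltr0n ?fact_gt0 //; last lia.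
  by rewrite -natrX ler_nat fact_le.
apply: (@le_trans _ _ ((n%:R/2)^+(n.*2) * ((n.*2)%:R ^+ (n.*2))^-1)); last first.
  apply: ler_pM => //.
  all: try (by apply: exprn_ge0; lra).
  all: try (by rewrite invr_ge0 exprn_ge0).
rewrite -[X in _ <= _ * X]exprVn -exprMn.
have -> : n%:R / 2 * (n.*2)%:R^-1 = (2 * 2 : R)^-1.
  by rewrite -muln2 natrM; field; rewrite lt0r_neq0.
have e : (n.*2 + n.*2 = 4 * n)%N by lia.
by rewrite exprVn exprMn -exprD e.
Qed.
End Num.

Lemma scalar_pow (R : realType) m (a : R) k : (a%:M : 'M[R]_m.+1) ^+ k = (a ^+ k)%:M.
Proof.
elim: k => [|k IH]; first by rewrite !expr0.
by rewrite !exprS IH -mulmxE -scalar_mxM.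
Qed.

Lemma term_id (R : realType) n (t : R) k (x y : state n) :
  t ^+ k / (k`!)%:R * ((generator R n) ^+ k) x y =
  \sum_(i < k.+1) exp_coeff (- (5 * t)) (k - i)%N * (t ^+ i / (i`!)%:R * ((Nm R n) ^+ i) x y).
Proof.
have eQ : generator R n = (-5)%:M + Nm R n.
  apply/matrixP => i j; rewrite /Nm !mxE.
  by case: (i == j) => /=; rewrite ?mulr1n ?mulr0n; ring.
have hc : GRing.comm ((-5 : R)%:M) (Nm R n).
  by rewrite /GRing.comm -!mulmxE scalar_mxC.
rewrite eQ exprDn_comm // summxE mulr_sumr; apply: eq_bigr => i _.
have hi : (i <= k)%N by rewrite -ltnS.
rewrite mulmxnE scalar_pow -mulmxE mul_scalar_mx mxE /exp_coeff /=.
have hk : (k`!%:R : R) = ('C(k, i))%:R * ((i`!)%:R * ((k - i)`!)%:R).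
  by rewrite -!natrM bin_fact.
have ht : t ^+ k = t ^+ (k - i) * t ^+ i by rewrite -exprD subnK.
rewrite hk ht -mulNr exprMn -mulr_natr.
have f1 : ('C(k, i))%:R != 0 :> R by rewrite pnatr_eq0 -lt0n bin_gt0.
have f2 : (i`!)%:R != 0 :> R by rewrite pnatr_eq0 -lt0n fact_gt0.
have f3 : ((k-i)`!)%:R != 0 :> R by rewrite pnatr_eq0 -lt0n fact_gt0.
field.
by rewrite f1 f2 f3.
Qed.
Section Mertens.
Variable R : realType.

Lemma half_cvg (u : R^nat) (l : R) : u @ \oo --> l -> (fun K => u K./2) @ \oo --> l.
Proof.
move=> ul.
have h : (fun K : nat => K./2) @ \oo --> \oo.
  move=> P [N _ HN]; exists N.*2 => // K /= HK; apply: HN => /=.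
  by rewrite -(half_double N) half_leq.
exact: (cvg_comp _ _ h ul).
Qed.

Arguments half_cvg [u l].

Lemma conv_id (a b : R^nat) K :
  series (fun k => \sum_(i < k.+1) a (k - i)%N * b i) K =
  \sum_(i < K) b i * series a (K - i)%N.
Proof.
elim: K => [|K IH]; first by rewrite /series /= big_geq // big_ord0.
rewrite seriesSr IH big_ord_recr /=.
rewrite [in RHS]big_ord_recr /= subSnn.
have -> : series a 1 = a 0%N by rewrite seriesS /series /= big_geq // addr0.
rewrite subnn addrA [a 0%N * _]mulrC; congr (_ + _).
rewrite -big_split /=; apply: eq_bigr => i _.
rewrite subSn; last by apply: ltnW.
rewrite seriesSr mulrDr; congr (_ + _); exact: mulrC.
Qed.

Lemma mertens (a b : R^nat) (A B : R) :
  series a @ \oo --> A -> cvgn (series (fun k => `|a k|)) ->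
  (forall i, 0 <= b i) -> series b @ \oo --> B ->
  series (fun k => \sum_(i < k.+1) a (k - i)%N * b i) @ \oo --> A * B.
Proof.
move=> aA abs b0 bB.
set Ab := series (fun k => `|a k|).
pose Al : R := limn Ab.
have Abnd : nondecreasing_seq Ab.
  by move=> m k mk; apply: nondecreasing_series => // *; exact: normr_ge0.
have absA : Ab @ \oo --> Al := abs.
have AbAl n : Ab n <= Al by exact: nondecreasing_cvgn_le.
have Ab0 n : 0 <= Ab n by apply: sumr_ge0 => *; exact: normr_ge0.
have bnd : nondecreasing_seq (series b).
  by move=> m k mk; apply: nondecreasing_series.
have Bl : limn (series b) = B by apply: cvg_lim.
have bB' n : series b n <= B.
  rewrite -Bl; apply: nondecreasing_cvgn_le => //; by apply/cvg_ex; exists B.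
set C := series _.
set D := fun K => C K - series a K * series b K.
have sb K : series b K = \sum_(i < K) b i by rewrite /series /= big_mkord.
have HD K : `|D K| <= B * (Ab K - Ab K./2) + Al * (series b K - series b K./2).
  have eD : D K = \sum_(i < K) b i * (series a (K - i)%N - series a K).
    rewrite /D /C conv_id sb mulr_sumr -sumrB; apply: eq_bigr => i _.
    by rewrite mulrBr [series a K * b i]mulrC.
  rewrite eD; apply: (le_trans (ler_norm_sum _ _ _)).
  have step i : (i < K)%N -> `|b i * (series a (K-i)%N - series a K)| <= b i * (Ab K - Ab (K-i)%N).
    move=> iK; rewrite normrM ger0_norm //; apply: ler_wpM2l => //.
    rewrite distrC sub_series_geq ?leq_subr // /Ab sub_series_geq ?leq_subr //; exact: ler_norm_sum.
  apply: (@le_trans _ _ (\sum_(i<K) b i * (Ab K - Ab (K-i)%N))); first by apply: ler_sum => i _; exact: step.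
  rewrite (bigID (fun i : 'I_K => (i < K./2)%N)) /=.
  have hK : (K./2 + K./2 <= K)%N by rewrite addnn -{2}(odd_double_half K) leq_addl.
  have sbh : series b K = \sum_(i<K | (i < K./2)%N) b i + \sum_(i<K | ~~ (i < K./2)%N) b i.
    by rewrite sb (bigID (fun i : 'I_K => (i < K./2)%N)).
  have sbh2 : series b K./2 = \sum_(i<K | (i < K./2)%N) b i.
    by rewrite sb (big_ord_widen K) //; lia.
  apply: lerD.
  - apply: (@le_trans _ _ (\sum_(i<K | (i < K./2)%N) b i * (Ab K - Ab K./2))).
      apply: ler_sum => i hi; apply: ler_wpM2l => //; rewrite lerD2l lerN2; apply: Abnd; lia.
    rewrite -mulr_suml -sbh2; apply: ler_pM => //.
    - by rewrite sb; apply: sumr_ge0.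
    - by rewrite subr_ge0; apply: Abnd; lia.
  - apply: (@le_trans _ _ (\sum_(i<K | ~~ (i < K./2)%N) b i * Al)).
      apply: ler_sum => i hi; apply: ler_wpM2l => //.
      by rewrite lerBlDr; apply: le_trans (AbAl K) _; rewrite lerDl.
    rewrite -mulr_suml mulrC sbh sbh2 addrC addKr //.
have f0 : (fun K => B * (Ab K - Ab K./2) + Al * (series b K - series b K./2)) @ \oo --> 0.
  have h1 : (fun K => B * (Ab K - Ab K./2)) @ \oo --> B * (Al - Al) by apply: cvgMl_tmp; exact: cvgB absA (half_cvg absA).
  have h2 : (fun K => Al * (series b K - series b K./2)) @ \oo --> Al * (B - B) by apply: cvgMl_tmp; exact: cvgB bB (half_cvg bB).
  suff -> : (0:R) = B * (Al - Al) + Al * (B - B) by exact: cvgD h1 h2.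
  by rewrite !subrr !mulr0 addr0.
have D0 : D @ \oo --> 0.
  pose f K := B * (Ab K - Ab K./2) + Al * (series b K - series b K./2).
  apply: (@squeeze_cvgr _ _ _ _ (fun K => - f K) f D).
  - by near=> K; rewrite -ler_norml; exact: HD.
  - by rewrite -oppr0; exact: cvgN f0.
  - exact: f0.
have -> : C = D + (fun K => series a K * series b K).
  by apply/funext => K; rewrite /D /= subrK.
by rewrite -[A * B]add0r; apply: cvgD => //; exact: cvgM.
Unshelve. all: by end_near.
Qed.
End Mertens.

Lemma abs_ineq (R : realType) (m a b Q : R) : 0 < m -> 0 < a -> 0 < b -> 0 < Q ->
  m * m * (a * b) <= Q -> m * Q^-1 <= a^-1 * b^-1 * m^-1.
Proof.
move=> hm ha hb hQ h.
have e1 : m * Q^-1 = (m * m * (a * b)) * (Q^-1 * (a * b)^-1 * m^-1).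
  by field; rewrite !lt0r_neq0.
have e2 : a^-1 * b^-1 * m^-1 = Q * (Q^-1 * (a * b)^-1 * m^-1).
  by field; rewrite !lt0r_neq0.
rewrite e1 e2; apply: ler_wpM2r => //.
by rewrite !mulr_ge0 // invr_ge0 ltW // ?mulr_gt0.
Qed.

Lemma key_ineq (R : realType) (n : nat) : (40 <= n)%N ->
  n%:R * (2 ^+ (n ^ 2))^-1 <= (2 ^+ (30 * n))^-1 * (2 ^+ (4 * n))^-1 * n%:R^-1 :> R.
Proof.
move=> hn; apply: abs_ineq; rewrite ?ltr0n ?exprn_gt0 //; first lia.
have := @final_nat n hn; rewrite -(ler_nat R) !natrM !natrX.
by rewrite -exprD (_ : (30 * n + 4 * n = 34 * n)%N) //; lia.
Qed.

Theorem lemma3p5 (R : realType) :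
  exists N : nat, forall n : nat, (2 <= n)%N -> (N <= n)%N ->
    forall pi : state n -> R, reversible_distribution R n pi ->
    forall (x y : state n), nat_of_ord x != n.*2 -> nat_of_ord y != n.*2 ->
    forall t : R, n%:R / 2 <= t -> t <= 3 * n%:R ->
      pi y <= semigroup R n t x y.
Proof.
exists 40%N => n n2 n40 pi hp x y hx hy t ht1 ht3.
have t0 : 0 <= t by apply: le_trans ht1; rewrite divr_ge0 ?ler0n.
pose a := exp_coeff (- (5 * t)).
pose b := fun i => t ^+ i / (i`!)%:R * ((Nm R n) ^+ i) x y.
have b0 i : 0 <= b i.
  by rewrite /b mulr_ge0 ?divr_ge0 ?exprn_ge0 ?ler0n //; exact: Npow_ge0.
have ha : series a @ \oo --> expR (- (5 * t)) by exact: is_cvg_series_exp_coeff.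
have habs : cvgn (series (fun k => `|a k|)).
  have -> : (fun k => `|a k|) = exp_coeff (5 * t).
    apply/funext => k; rewrite /a /exp_coeff /= normrM normrX normrN normfV normr_nat.
    by rewrite ger0_norm // mulr_ge0.
  exact: is_cvg_series_exp_coeff.
have hb : cvgn (series b).
  apply: (@series_le_cvg _ b (exp_coeff (t * (5 * ((n.*2).+1)%:R)))) => //.
  - move=> k; rewrite /exp_coeff /= divr_ge0 ?exprn_ge0 ?ler0n //.
    by rewrite mulr_ge0 // mulr_ge0 ?ler0n.
  - move=> k; rewrite /b /exp_coeff /= exprMn mulrAC.
    apply: ler_pM => //.
    all: try (by rewrite invr_ge0 ler0n).
    all: try (by rewrite mulr_ge0 ?exprn_ge0 //; exact: Npow_ge0).
    apply: ler_pM => //.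
    all: try (by rewrite exprn_ge0).
    all: try exact: Npow_ge0.
    apply: mxpow_le; first exact: Nm_ge0.
    exact: Nm_le5.
  - exact: is_cvg_series_exp_coeff.
pose B : R := limn (series b).
have hbB : series b @ \oo --> B := hb.
have hm := @mertens R _ _ _ _ ha habs b0 hbB.
have hsg : semigroup R n t x y = expR (- (5 * t)) * B.
  rewrite /semigroup; apply: cvg_lim => //.
  have -> : (fun k => t ^+ k / (k`!)%:R * ((generator R n) ^+ k) x y) =
            (fun k => \sum_(i < k.+1) a (k - i)%N * b i).
    by apply/funext => k; rewrite term_id.
  exact: hm.
have hB : b (n.*2) <= B.
  have h1 : series b (n.*2).+1 <= B.
    apply: nondecreasing_cvgn_le => //.
    by move=> p r pr; apply: nondecreasing_series.
  have h2 : 0 <= series b (n.*2) by apply: sumr_ge0.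
  by move: h1; rewrite seriesSr; lra.
have hx' : (x < n.*2)%N by move: hx (ltn_ord x); rewrite ltnS ltn_neqAle => -> ->.
have hy' : (y < n.*2)%N by move: hy (ltn_ord y); rewrite ltnS ltn_neqAle => -> ->.
have hpath := @path_bound R n n2 x y hx' hy'.
rewrite !inord_val in hpath.
have hpi := @pi_bound R n n2 pi hp (n.*2 - y) (leq_subr _ _).
rewrite subKn ?(ltnW hy') // inord_val in hpi.
set q : R := (2 ^+ (n ^ 2))^-1 in hpath hpi.
set d := (x - y)%N in hpath.
have hq0 : 0 <= q by exact: q_ge0.
have hq1 : q <= 1 by exact: q_le1.
have hn : 0 < n%:R :> R by rewrite ltr0n; lia.
have hc : (if (y <= n)%N then n%:R else 1) <= n%:R :> R.
  by case: ifP => // _; rewrite ler1n; lia.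
have hqq : q ^+ (n.*2 - y) <= q ^+ d.+1.
  apply: ler_wiXn2l => //; move: hx' hy'; rewrite /d; lia.
have step1 : pi y <= n%:R * (q * q ^+ d).
  apply: le_trans hpi _; rewrite -exprS; apply: ler_pM => //.
  - by case: ifP => _ //; rewrite ler0n.
  - by apply: exprn_ge0.
pose A : R := 2 ^+ (30 * n); pose C : R := 2 ^+ (4 * n).
have hA : 0 < A by rewrite exprn_gt0.
have hC : 0 < C by rewrite exprn_gt0.
have hE1 := @expR_bound R n t t0 ht3.
have hE2 := @poisson_bound R n t (ltnW n2) ht1.
have hbn : b (n.*2) = t ^+ n.*2 / (n.*2)`!%:R * ((Nm R n) ^+ n.*2) x y by [].
have step2 : A^-1 * C^-1 * (n%:R^-1 * q ^+ d) <= expR (- (5 * t)) * B.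
  apply: le_trans (_ : expR (- (5 * t)) * b (n.*2) <= _); last first.
    by apply: ler_wpM2l => //; exact: expR_ge0.
  rewrite hbn [X in _ <= X]mulrA; apply: ler_pM => //.
  all: try (by rewrite mulr_ge0 // invr_ge0 ltW).
  all: try (by rewrite mulr_ge0 ?invr_ge0 ?ler0n // exprn_ge0).
  apply: ler_pM => //.
  all: try (by rewrite invr_ge0 ltW).
have key : n%:R * q <= A^-1 * C^-1 * n%:R^-1 by exact: key_ineq.
rewrite hsg; apply: le_trans step1 _; apply: le_trans _ step2.
rewrite mulrA [X in _ <= X]mulrA; apply: ler_pM => //.
all: try (by rewrite mulr_ge0 ?ler0n).
all: try exact: exprn_ge0.
Qed.
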